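(* Let $G$ be a finite simple graph on the vertex set $V(G)=\{x_1,\ldots,x_n\}$ with $n\geq 1$, and let $NI(G)\subseteq R=\mathbf{k}[x_1,\ldots,x_n]$ be its closed neighborhood ideal. Then every minimal prime ideal of $NI(G)$ is of the form $\langle x_{j_1},\ldots,x_{j_r}\rangle$, where $\{x_{j_1},\ldots,x_{j_r}\}$ is a minimal dominating set of $G$. Consequently $$\operatorname{ht}(NI(G))=\gamma(G),\qquad \operatorname{bight}(NI(G))=\gamma'_G,$$ and $$\operatorname{ht}(NI(G)^\vee)=\min\{\deg_G(x_i)\,:\, x_i\in V(G)\}+1.$$
   Context: $\mathbf{k}$ is a field and the vertices of $G$ are identified with the variables of $R$. For a vertex $x_i$, $N[x_i]=\{x_i\}\cup\{x_j : \{x_i,x_j\}\in E(G)\}$ is its closed neighborhood. The closed neighborhood ideal is $NI(G)=\langle \prod_{x_j\in N[x_i]}x_j : x_i\in V(G)\rangle$. A set $S\subseteq V(G)$ is a dominating set if $S\cap N[x]\neq\emptyset$ for every vertex $x$; it is a minimal dominating set if no proper subset is dominating. $\gamma(G)$ is the minimum size of a dominating set and $\gamma'_G=\max\{|C| : C \text{ a minimal dominating set of } G\}$. $\operatorname{bight}(I)$ is the maximum height of a minimal prime of $I$. For a squarefree monomial ideal $I$ with minimal primes $P_1,\ldots,P_m$ (each generated by variables), its Alexander dual is $I^\vee=\langle \prod_{x\in P_k}x : 1\le k\le m\rangle$. *)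

(* Defs.v *)
From HB Require Import structures.
From mathcomp Require Import all_boot all_order all_algebra.
From mathcomp Require Import mpoly.

Set Implicit Arguments.
Unset Strict Implicit.
Unset Printing Implicit Defensive.

Import GRing.Theory.
Local Open Scope ring_scope.

Section Ideals.
Variable R : comNzRingType.

Definition is_ideal (I : R -> Prop) : Prop :=
  [/\ I 0, (forall a b, I a -> I b -> I (a + b)) &
      (forall r a, I a -> I (r * a))].

Definition gen_ideal (S : R -> Prop) : R -> Prop :=
  fun p => forall J, is_ideal J -> (forall s, S s -> J s) -> J p.

Definition subid (I J : R -> Prop) : Prop := forall p, I p -> J p.
Definition eqid (I J : R -> Prop) : Prop := forall p, I p <-> J p.

Definition is_prime (P : R -> Prop) : Prop :=
  [/\ is_ideal P, ~ P 1 & forall a b, P (a * b) -> P a \/ P b].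

Definition minimal_prime (I P : R -> Prop) : Prop :=
  [/\ is_prime P, subid I P &
      forall Q, is_prime Q -> subid I Q -> subid Q P -> subid P Q].

Definition prime_chain_to (P : R -> Prop) (h : nat) : Prop :=
  exists c : nat -> (R -> Prop),
    [/\ forall i, i <= h -> is_prime (c i),
        eqid (c h) P &
        forall i, i < h -> subid (c i) (c i.+1) /\ ~ subid (c i.+1) (c i)]%N.

Definition prime_height (P : R -> Prop) (h : nat) : Prop :=
  prime_chain_to P h /\ forall h', prime_chain_to P h' -> (h' <= h)%N.

Definition ideal_height (I : R -> Prop) (h : nat) : Prop :=
  (exists P, [/\ is_prime P, subid I P & prime_height P h]) /\
  (forall P h', is_prime P -> subid I P -> prime_height P h' -> (h <= h')%N).

Definition ideal_bigheight (I : R -> Prop) (h : nat) : Prop :=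
  (exists P, minimal_prime I P /\ prime_height P h) /\
  (forall P h', minimal_prime I P -> prime_height P h' -> (h' <= h)%N).

End Ideals.

Section Graphs.
Variables (n : nat) (e : rel 'I_n).

Definition simple_graph : Prop := ssrbool.symmetric e /\ irreflexive e.

Definition cnbhd (x : 'I_n) : {set 'I_n} := x |: [set y | e x y].

Definition deg (x : 'I_n) : nat := #|[set y | e x y]|.

Definition dominating (S : {set 'I_n}) : bool :=
  [forall x, S :&: cnbhd x != set0].

Definition minimal_dominating (S : {set 'I_n}) : bool := minset dominating S.

(* gamma(G) : minimum size of a dominating set (setT is dominating) *)
Definition gamma : nat := \big[minn/n]_(S : {set 'I_n} | dominating S) #|S|.

Definition gamma' : nat := \max_(S : {set 'I_n} | minimal_dominating S) #|S|.

Definition min_deg : nat := \big[minn/n]_(x : 'I_n) deg x.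

End Graphs.

Section Poly.
Variables (k : fieldType) (n : nat) (e : rel 'I_n).

Definition var_ideal (S : {set 'I_n}) : {mpoly k[n]} -> Prop :=
  gen_ideal (fun p => exists2 j, j \in S & p = 'X_j).

Definition NI : {mpoly k[n]} -> Prop :=
  gen_ideal (fun p => exists x : 'I_n, p = \prod_(j in cnbhd e x) 'X_j).

Definition NI_dual : {mpoly k[n]} -> Prop :=
  gen_ideal (fun p => exists S : {set 'I_n},
     minimal_prime NI (var_ideal S) /\ p = \prod_(j in S) 'X_j).

End Poly.

(* Main.v *)
Require Import Defs.
From mathcomp Require Import all_boot all_order all_algebra.
From mathcomp Require Import mpoly.
From mathcomp Require Import zify.
From Stdlib Require Import Classical ClassicalEpsilon.

Set Implicit Arguments.
Unset Strict Implicit.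
Unset Printing Implicit Defensive.
Import GRing.Theory.
Local Open Scope ring_scope.



Section IdealBasics.
Variable R : comNzRingType.
Implicit Types (I J P Q : R -> Prop).

Lemma id0 I : is_ideal I -> I 0. Proof. by case. Qed.
Lemma idD I a b : is_ideal I -> I a -> I b -> I (a + b). Proof. by case=> _ h _; apply: h. Qed.
Lemma idM I r a : is_ideal I -> I a -> I (r * a). Proof. by case=> _ _ h; apply: h. Qed.
Lemma idMr I r a : is_ideal I -> I a -> I (a * r). Proof. by move=> hI ha; rewrite mulrC; apply: idM. Qed.
Lemma idN I a : is_ideal I -> I a -> I (- a).
Proof. by move=> hI ha; rewrite -mulN1r; apply: idM. Qed.
Lemma idB I a b : is_ideal I -> I a -> I b -> I (a - b).
Proof. by move=> hI ha hb; apply: idD => //; apply: idN. Qed.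
Lemma idsum I (T : Type) (r : seq T) (Pr : pred T) (F : T -> R) :
  is_ideal I -> (forall i, Pr i -> I (F i)) -> I (\sum_(i <- r | Pr i) F i).
Proof.
move=> hI hF; elim/big_ind: _ => //; [exact: id0 | move=> a b; exact: idD].
Qed.

Lemma gen_is_ideal (S : R -> Prop) : is_ideal (gen_ideal S).
Proof.
split.
- by move=> J hJ _; apply: id0.
- by move=> a b ha hb J hJ hS; apply: idD => //; [apply: ha | apply: hb].
- by move=> r a ha J hJ hS; apply: idM => //; apply: ha.
Qed.

Lemma gen_in (S : R -> Prop) s : S s -> gen_ideal S s.
Proof. by move=> hs J _ hS; apply: hS. Qed.

Lemma gen_min (S : R -> Prop) J : is_ideal J -> (forall s, S s -> J s) ->
  subid (gen_ideal S) J.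
Proof. by move=> hJ hS p hp; apply: hp. Qed.

Lemma prime_ideal P : is_prime P -> is_ideal P. Proof. by case. Qed.
Lemma prime_1 P : is_prime P -> ~ P 1. Proof. by case. Qed.
Lemma prime_mul P a b : is_prime P -> P (a * b) -> P a \/ P b.
Proof. by case=> _ _ h; apply: h. Qed.

Lemma prime_expN P f r : is_prime P -> ~ P f -> ~ P (f ^+ r).
Proof.
move=> hP hf; elim: r => [|r IH]; first by rewrite expr0; apply: prime_1.
by rewrite exprS => /(prime_mul hP) [].
Qed.

Lemma prime_prod P (T : finType) (A : {set T}) (F : T -> R) :
  is_prime P -> P (\prod_(j in A) F j) -> exists2 j, j \in A & P (F j).
Proof.
move=> hP; elim/big_rec: _ => [|j x jA IH]; first by move/(prime_1 hP).
case/(prime_mul hP); first by exists j.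
exact: IH.
Qed.

End IdealBasics.



Section VarIdeal.
Variables (k : fieldType) (n : nat).
Local Notation poly := {mpoly k[n]}.
Implicit Types (S T : {set 'I_n}) (p q : poly).

Definition hS S (j : 'I_n) : poly := if j \in S then 0 else 'X_j.
Definition sig S (p : poly) : poly := mmap (@mpolyC n k) (hS S) p.

Lemma sigM S p q : sig S (p * q) = sig S p * sig S q.
Proof. by rewrite /sig rmorphM. Qed.
Lemma sigD S p q : sig S (p + q) = sig S p + sig S q.
Proof. by rewrite /sig rmorphD. Qed.
Lemma sig0 S : sig S 0 = 0. Proof. by rewrite /sig rmorph0. Qed.
Lemma sig1 S : sig S 1 = 1. Proof. by rewrite /sig rmorph1. Qed.
Lemma sigX S m : sig S 'X_[m] = \prod_(i < n) hS S i ^+ m i.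
Proof. by rewrite /sig mmapX. Qed.
Lemma sigXU S j : sig S 'X_j = hS S j.
Proof. by rewrite sigX -/(mmap1 _ _) mmap1U. Qed.
Lemma sigZ S c p : sig S (c *: p) = c *: sig S p.
Proof. by rewrite /sig mmapZ mul_mpolyC. Qed.

Lemma sig_ideal S : is_ideal (fun p : poly => sig S p = 0).
Proof.
split; first exact: sig0.
- by move=> a b ha hb; rewrite sigD ha hb addr0.
- by move=> r a ha; rewrite sigM ha mulr0.
Qed.

Lemma var_ideal_X S j : j \in S -> @var_ideal k n S 'X_j.
Proof. by move=> jS; apply: gen_in; exists j. Qed.

Lemma var_ideal_is_ideal S : is_ideal (@var_ideal k n S).
Proof. exact: gen_is_ideal. Qed.

Lemma var_idealX S m : @var_ideal k n S 'X_[m] \/ sig S 'X_[m] = 'X_[m].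
Proof.
case: (boolP [exists j, (j \in S) && (0 < m j)%N]).
  case/existsP=> j /andP [jS mj]; left.
  rewrite mpolyXE_id (bigD1 j) //= -(prednK mj) exprS -mulrA.
  apply: (idMr _ (var_ideal_is_ideal S)); exact: var_ideal_X.
rewrite negb_exists => /forallP H; right.
rewrite sigX [RHS]mpolyXE_id; apply: eq_bigr => i _.
rewrite /hS; case: ifP => // iS.
by move: (H i); rewrite iS /= lt0n negbK => /eqP ->; rewrite !expr0.
Qed.

Lemma var_ideal_sig0 S p : @var_ideal k n S p -> sig S p = 0.
Proof.
move=> hp; apply: (hp (fun q => sig S q = 0)); first exact: sig_ideal.
by move=> s [j jS ->]; rewrite sigXU /hS jS.
Qed.

Lemma var_ideal_sub_sig S p : @var_ideal k n S (p - sig S p).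
Proof.
have hI := var_ideal_is_ideal S.
rewrite {1 2}(mpolyE p).
have -> : sig S (\sum_(m <- msupp p) p@_m *: 'X_[m]) =
          \sum_(m <- msupp p) p@_m *: sig S 'X_[m].
  rewrite /sig rmorph_sum; apply: eq_bigr => m _; exact: sigZ.
rewrite -sumrB; elim/big_ind: _ => [|a b ha hb|m _]; [exact: (id0 hI)|exact: (idD hI)|].
rewrite -scalerBr -mul_mpolyC; apply: (idM _ hI).
case: (var_idealX S m) => [h|->]; last by rewrite subrr; apply: (id0 hI).
by rewrite (var_ideal_sig0 h) subr0.
Qed.

Lemma var_idealP S p : @var_ideal k n S p <-> sig S p = 0.
Proof.
split; first exact: var_ideal_sig0.
move=> h; have := @var_ideal_sub_sig S p; rewrite h subr0; exact.
Qed.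

Lemma var_ideal_prime S : is_prime (@var_ideal k n S).
Proof.
split; first exact: var_ideal_is_ideal.
  by move/var_idealP; rewrite sig1; apply/eqP; rewrite oner_eq0.
move=> a b /var_idealP; rewrite sigM => /eqP; rewrite mulf_eq0.
by case/orP=> /eqP h; [left | right]; apply/var_idealP.
Qed.

Lemma var_idealXP S j : @var_ideal k n S 'X_j <-> j \in S.
Proof.
split; last exact: var_ideal_X.
move/var_idealP; rewrite sigXU /hS; case: ifP => // _.
move/(congr1 (mcoeff U_(j))); rewrite mcoeffX eqxx mcoeff0 => /eqP.
by rewrite oner_eq0.
Qed.

Lemma var_ideal_mono S T : S \subset T -> subid (@var_ideal k n S) (@var_ideal k n T).
Proof.
move=> sST; apply: gen_min; first exact: var_ideal_is_ideal.
by move=> s [j jS ->]; apply: var_ideal_X; apply: (subsetP sST).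
Qed.

Lemma var_ideal_subP S T : subid (@var_ideal k n S) (@var_ideal k n T) -> S \subset T.
Proof.
move=> h; apply/subsetP => j jS; apply/var_idealXP; apply: h; exact: var_ideal_X.
Qed.

Lemma var_ideal_prodP S (A : {set 'I_n}) :
  @var_ideal k n S (\prod_(j in A) 'X_j) <-> A :&: S != set0.
Proof.
split.
  case/(prime_prod (var_ideal_prime S)) => j jA /var_idealXP jS.
  by apply/set0Pn; exists j; rewrite inE jA jS.
case/set0Pn => j; rewrite inE => /andP [jA jS].
rewrite (bigD1 j) //=; apply: (idMr _ (var_ideal_is_ideal S)); exact: var_ideal_X.
Qed.

Definition Tset (P : poly -> Prop) : {set 'I_n} :=
  [set j | is_left (excluded_middle_informative (P 'X_j))].

Lemma TsetP (P : poly -> Prop) j : j \in Tset P <-> P 'X_j.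
Proof.
rewrite inE; case: excluded_middle_informative => //= h; split => //.
Qed.

Lemma Tset_sub (P : poly -> Prop) : is_ideal P -> subid (@var_ideal k n (Tset P)) P.
Proof.
move=> hP; apply: gen_min => // s [j jT ->]; exact/TsetP.
Qed.

End VarIdeal.



Section Dim.
Variables (k : fieldType) (n : nat).
Local Notation poly := {mpoly k[n]}.

Definition indep (P : poly -> Prop) (I : finType) (F : I -> poly) :=
  forall c : I -> k, P (\sum_i c i *: F i) -> forall i, c i = 0.

Lemma indep_step (P Q : poly -> Prop) (I : finType) (F : I -> poly) f M :
  is_prime P -> is_ideal Q -> subid P Q -> Q f -> ~ P f -> indep Q F ->
  indep P (fun x : 'I_M.+1 * I => f ^+ x.1 * F x.2).
Proof.
move=> hP hQ PQ Qf nPf hF c hc.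
pose g := fun r : 'I_M.+1 => \sum_i c (r, i) *: F i.
have E : \sum_x c x *: (f ^+ x.1 * F x.2) = \sum_(r : 'I_M.+1) f ^+ r * g r.
  rewrite (eq_bigr (fun x => c (x.1, x.2) *: (f ^+ x.1 * F x.2))); last by case.
  rewrite -(pair_bigA _ (fun r i => c (r, i) *: (f ^+ r * F i))) /=.
  apply: eq_bigr => r _; rewrite mulr_sumr.
  by apply: eq_bigr => i _; rewrite scalerAr.
rewrite E in hc.
suff H : forall m (r : 'I_M.+1), val r = m -> forall i, c (r, i) = 0.
  by case=> r i; apply: (H r).
elim/ltn_ind => m IH r rm.
have g0 : forall r' : 'I_M.+1, (r' < r)%N -> g r' = 0.
  move=> r' lt; rewrite /g big1 // => i _; rewrite (IH r') ?scale0r //.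
  by rewrite -rm.
pose u := \sum_(r' : 'I_M.+1) f ^+ (r' - r) * g r'.
have Eu : \sum_(r' : 'I_M.+1) f ^+ r' * g r' = f ^+ r * u.
  rewrite /u mulr_sumr; apply: eq_bigr => r' _.
  case: (ltnP r' r) => h; first by rewrite g0 // !mulr0.
  by rewrite mulrA -exprD subnKC.
rewrite Eu in hc.
have Pu : P u.
  by case: (prime_mul hP hc) => // /(prime_expN hP nPf).
have Qu : Q u := PQ _ Pu.
have Qrest : Q (u - g r).
  rewrite /u (bigD1 r) //= subnn expr0 mul1r addrAC subrr add0r.
  elim/big_ind: _ => [|a b ha hb|r' ne]; [exact: (id0 hQ)|exact: (idD hQ)|].
  case: (ltnP r' r) => h; first by rewrite g0 // mulr0; apply: (id0 hQ).
  have pos : (0 < r' - r)%N.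
    rewrite subn_gt0 ltn_neqAle h andbT; apply: contra ne => /eqP e.
    by apply/eqP/val_inj.
  rewrite -(prednK pos) exprS -mulrA; exact: (idMr _ hQ).
have Qg : Q (g r).
  have -> : g r = u - (u - g r) by rewrite opprB addrC subrK.
  exact: idB.
exact: (hF (fun i => c (r, i)) Qg).
Qed.

Lemma msizeM_bnd (p q : poly) a b :
  (msize p <= a.+1)%N -> (msize q <= b.+1)%N -> (msize (p * q) <= (a + b).+1)%N.
Proof.
have [->|nzp] := eqVneq p 0; first by rewrite mul0r msize0.
have [->|nzq] := eqVneq q 0; first by rewrite mulr0 msize0.
rewrite msizeM // -subn1 => hp hq.
have := leq_add hp hq; move: (_ + _)%N => s; lia.
Qed.

Lemma msizeX_bnd (f : poly) E r : (msize f <= E.+1)%N -> (msize (f ^+ r) <= (r * E).+1)%N.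
Proof.
move=> hf; elim: r => [|r IH]; first by rewrite expr0 msize1.
by rewrite exprS mulSn; apply: msizeM_bnd.
Qed.

Lemma mnm_le_mdeg (m : 'X_{1..n}) j : (m j <= mdeg m)%N.
Proof. by rewrite mdegE (bigD1 j) //= leq_addr. Qed.

Lemma indep_card (I : finType) (F : I -> poly) D :
  indep (fun p => p = 0) F -> (forall i, msize (F i) <= D)%N -> (#|I| <= D ^ n)%N.
Proof.
move=> hF hD.
rewrite leqNgt; apply/negP => lt.
pose B := {ffun 'I_n -> 'I_D}.
pose dec (b : B) : 'X_{1..n} := [multinom (b i : nat) | i < n].
pose A : 'M[k]_(#|I|, #|B|) := \matrix_(a, j) (F (enum_val a))@_(dec (enum_val j)).
have cardB : #|B| = (D ^ n)%N by rewrite card_ffun !card_ord.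
have nz : kermx A != 0.
  rewrite kermx_eq0 /row_free; apply/negP => /eqP e.
  have := rank_leq_col A; rewrite e cardB; lia.
have [a ha] : exists a, row a (kermx A) != 0.
  apply/existsP; apply: contraR nz => /existsPn H; apply/eqP/row_matrixP => i.
  by rewrite row0; apply/eqP/negbNE/H.
set v := row a (kermx A) in ha.
have vA : v *m A = 0 by rewrite -row_mul mulmx_ker row0.
pose c i := v 0 (enum_rank i).
have sum0 : \sum_i c i *: F i = 0.
  apply/mpolyP => m; rewrite mcoeff0 raddf_sum /=.
  under eq_bigr do rewrite mcoeffZ.
  case: (boolP [exists i, (F i)@_m != 0]); last first.
    by move/existsPn => H; rewrite big1 // => i _; rewrite (eqP (negbNE (H i))) mulr0.
  case/existsP => i nz'.
  have mD : forall j, (m j < D)%N.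
    move=> j; apply: (leq_ltn_trans (mnm_le_mdeg m j)); apply: (leq_trans _ (hD i)).
    by apply: msize_mdeg_lt; rewrite mcoeff_msupp.
  pose b : B := [ffun j => Ordinal (mD j)].
  have db : dec b = m by apply/mnmP => j; rewrite mnmE ffunE.
  transitivity ((v *m A) 0 (enum_rank b)); last by rewrite vA mxE.
  rewrite mxE.
  rewrite (reindex (@enum_val I I)) /=; last by apply: onW_bij; exact: enum_val_bij.
  apply: eq_bigr => j _; rewrite /c enum_valK mxE; congr (_ * _); rewrite /A mxE enum_rankK db //.
have c0 := hF c sum0.
apply: (negP ha); apply/eqP/rowP => j; 
move: (c0 (enum_val j)); rewrite /c enum_valK => ->; by rewrite mxE.
Qed.


Lemma leq_expn2 a b e : (a <= b)%N -> (a ^ e <= b ^ e)%N.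
Proof. by move=> h; elim: e => [|e IH] //; rewrite !expnS leq_mul. Qed.

Lemma arith_contra L E M : (n < L)%N -> M = ((L * E.+1) ^ n)%N ->
  (M.+1 ^ L <= (L * (M * E)).+1 ^ n)%N -> False.
Proof.
move=> hL hM h.
have h1 : ((L * (M * E)).+1 <= (L * E.+1) * M.+1)%N by nia.
have h2 := leq_expn2 n h1; rewrite expnMn -hM in h2.
have h3 : (M.+1 ^ n.+1 <= M.+1 ^ L)%N by apply: leq_pexp2l.
have := leq_trans h3 (leq_trans h h2); rewrite expnS leq_pmul2r ?expn_gt0 //; lia.
Qed.

Lemma dim_bound L (c : nat -> poly -> Prop) :
  (forall i, (i <= L)%N -> is_prime (c i)) ->
  (forall i, (i < L)%N -> subid (c i) (c i.+1) /\ ~ subid (c i.+1) (c i)) ->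
  (L <= n)%N.
Proof.
move=> hp hs.
have hf : forall i, (i < L)%N -> exists f, c i.+1 f /\ ~ c i f.
  move=> i /hs [_ nsub]; apply: NNPP => H; apply: nsub => f hf.
  by apply: NNPP => nf; apply: H; exists f.
have [E hE] : exists E, forall i, (i < L)%N ->
    exists f, [/\ c i.+1 f, ~ c i f & (msize f <= E.+1)%N].
  suff : forall j, (j <= L)%N -> exists E, forall i, (i < j)%N ->
    exists f, [/\ c i.+1 f, ~ c i f & (msize f <= E.+1)%N] by apply.
  elim => [|j IH] hj; first by exists 0%N.
  have [E hE] := IH (ltnW hj).
  have [f [f1 f2]] := hf j hj.
  exists (maxn E (msize f)) => i; rewrite ltnS leq_eqVlt => /orP [/eqP ->|lt].
    by exists f; split => //; rewrite (leq_trans (leq_maxr E _)) .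
  have [g [g1 g2 g3]] := hE i lt; exists g; split => //.
  by rewrite (leq_trans g3) // ltnS leq_maxl.
rewrite leqNgt; apply/negP => ltnL.
set M := ((L * E.+1) ^ n)%N.
have fam : forall j, (j <= L)%N -> exists (I : finType) (F : I -> poly),
    [/\ #|I| = (M.+1 ^ j)%N, indep (c (L - j)%N) F &
        forall i, (msize (F i) <= (j * (M * E)).+1)%N].
  elim => [|j IH] hj.
    exists ('I_1 : finType), (fun _ => 1); split.
    - by rewrite card_ord.
    - move=> c0; rewrite big_ord1 subn0 => h i; rewrite (ord1 i).
      apply: NNPP => nz; apply: (prime_1 (hp L (leqnn L))).
      have -> : (1 : poly) = (c0 ord0)^-1%:MP * (c0 ord0 *: 1).
        by rewrite mul_mpolyC scalerA mulVf ?scale1r //; apply/eqP.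
      by apply: (idM _ (prime_ideal (hp L (leqnn L)))).
    - by move=> _; rewrite msize1.
  have [I [F [cI iF bF]]] := IH (ltnW hj).
  have lt1 : (L - j.+1 < L)%N by lia.
  have [f [f1 f2 f3]] := hE _ lt1.
  have eq1 : (L - j.+1).+1 = (L - j)%N by rewrite subnSK.
  rewrite eq1 in f1.
  exists ('I_M.+1 * I)%type, (fun x : 'I_M.+1 * I => f ^+ x.1 * F x.2); split.
  - by rewrite card_prod card_ord cI expnS.
  - apply: (indep_step (Q := c (L - j)%N)) => //.
    + by apply: hp; lia.
    + by apply: prime_ideal; apply: hp; lia.
    + by have [] := hs _ lt1; rewrite eq1.
  - case=> r i /=; apply: leq_trans (msizeM_bnd (msizeX_bnd r f3) (bF i)) _.
    rewrite ltnS mulSn leq_add2r; apply: leq_mul => //; exact: (ltnSE (ltn_ord r)).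
have [I [F [cI iF bF]]] := fam L (leqnn L).
rewrite subnn in iF.
have iF0 : indep (fun p => p = 0) F.
  move=> c0 h; apply: iF; rewrite h; apply: id0; apply: prime_ideal; exact: hp.
have := indep_card iF0 bF; rewrite cI.
exact: arith_contra.
Qed.

End Dim.



Section Chains.
Variable R : comNzRingType.
Implicit Types (P Q : R -> Prop).

Lemma chain_eqid P Q h : prime_chain_to P h -> eqid P Q -> prime_chain_to Q h.
Proof.
case=> c [c1 c2 c3] e; exists c; split => // p; rewrite c2; exact: e.
Qed.

Lemma chain_base P : is_prime P -> prime_chain_to P 0.
Proof. by move=> hP; exists (fun _ => P); split. Qed.

Lemma chain_append Q P h : prime_chain_to Q h -> is_prime P -> subid Q P ->
  ~ subid P Q -> prime_chain_to P h.+1.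
Proof.
case=> c [c1 c2 c3] hP QP nPQ.
exists (fun i => if (i <= h)%N then c i else P); split.
- by move=> i _; case: ifP => // /c1.
- by rewrite ltnn.
- move=> i hi; have [lt|->] : (i < h)%N \/ i = h by lia.
    by rewrite (ltnW lt) lt; apply: c3.
  rewrite leqnn ltnn; split; last first.
    by move=> H; apply: nPQ => p /H /c2.
  by move=> p /c2 /QP.
Qed.

End Chains.

Section Heights.
Variables (k : fieldType) (n : nat).
Local Notation poly := {mpoly k[n]}.
Local Notation VI := (@var_ideal k n).

Lemma chain_ext (A : {set 'I_n}) h : forall B : {set 'I_n},
  (forall x, x \in B -> x \notin A) -> prime_chain_to (VI A) h ->
  prime_chain_to (VI (A :|: B)) (h + #|B|).
Proof.
move=> B; move: {2}#|B| (erefl #|B|) => N; elim: N B => [|N IH] B hB dis ch.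
  move/eqP: hB; rewrite cards_eq0 => /eqP ->; rewrite setU0 ?cards0 addn0 //.
have [x xB] : exists x, x \in B.
  by apply/set0Pn; rewrite -cards_eq0 hB.
have cB' : #|B :\ x| = N by move: hB; rewrite (cardsD1 x) xB add1n => -[].
have dis' : forall y, y \in B :\ x -> y \notin A.
  by move=> y; rewrite inE => /andP [_ /dis].
have := IH _ cB' dis' ch => ch'.
rewrite hB addnS; rewrite cB' in ch'.
apply: (chain_append ch'); first exact: var_ideal_prime.
  apply: var_ideal_mono; apply: setUS; exact: subD1set.
move/var_ideal_subP/subsetP => /(_ x); rewrite !inE xB eqxx orbT /= => /(_ isT).
by rewrite (negbTE (dis x xB)).
Qed.

Lemma var_chain (S : {set 'I_n}) : prime_chain_to (VI S) #|S|.
Proof.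
have := @chain_ext set0 0 S (fun x _ => negbT (in_set0 x)) (chain_base (@var_ideal_prime k n set0)).
by rewrite set0U add0n.
Qed.

Lemma var_chain_bound (S : {set 'I_n}) h : prime_chain_to (VI S) h -> (h <= #|S|)%N.
Proof.
move=> ch.
have dis : forall x, x \in ~: S -> x \notin S by move=> x; rewrite inE.
have [c [c1 c2 c3]] := chain_ext dis ch.
have := dim_bound c1 c3.
have := cardsC S; rewrite card_ord; lia.
Qed.

Lemma var_height (S : {set 'I_n}) : prime_height (VI S) #|S|.
Proof. split; [exact: var_chain | exact: var_chain_bound]. Qed.

Lemma height_ge (P : poly -> Prop) (T : {set 'I_n}) h :
  is_prime P -> subid (VI T) P -> prime_height P h -> (#|T| <= h)%N.
Proof.
move=> hP TP [_ hb].
case: (classic (subid P (VI T))) => H.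
  apply: hb; apply: (chain_eqid (var_chain T)) => p; split; [exact: TP | exact: H].
have := hb _ (chain_append (var_chain T) hP TP H); lia.
Qed.

End Heights.



Lemma bigmin_le_seq (I : eqType) (r : seq I) (P : pred I) (F : I -> nat) N i :
  i \in r -> P i -> (\big[minn/N]_(j <- r | P j) F j <= F i)%N.
Proof.
elim: r => // a r IH; rewrite inE big_cons => /orP [/eqP <-|ir] Pi.
  by rewrite Pi geq_minl.
case: (P a); last exact: IH.
by rewrite geq_min IH ?orbT.
Qed.

Lemma bigmin_attained (I : finType) (P : pred I) (F : I -> nat) N i0 :
  P i0 -> (F i0 <= N)%N -> exists i, [/\ P i, \big[minn/N]_(j | P j) F j = F i &
     forall j, P j -> (F i <= F j)%N].
Proof.
move=> Pi0 hN.
case: (arg_minnP F Pi0) => i Pi hmin; exists i; split => //.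
apply/eqP; rewrite eqn_leq; apply/andP; split.
  by apply: bigmin_le_seq => //; rewrite mem_index_enum.
elim/big_ind: _ => //.
- exact: leq_trans (hmin _ Pi0) hN.
- by move=> a b ha hb; rewrite leq_min ha hb.
Qed.

Section Graph.
Variables (k : fieldType) (n : nat) (e : rel 'I_n).
Local Notation poly := {mpoly k[n]}.
Local Notation VI := (@var_ideal k n).
Local Notation NIe := (@NI k n e).

Lemma NI_subP (S : {set 'I_n}) : subid NIe (VI S) <-> dominating e S.
Proof.
split.
  move=> h; apply/forallP => x; rewrite setIC; apply: (proj1 (var_ideal_prodP k _ _)).
  by apply: h; apply: gen_in; exists x.
move/forallP => h; apply: gen_min; first exact: var_ideal_is_ideal.
move=> s [x ->]; apply/(var_ideal_prodP k); rewrite setIC; exact: h.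
Qed.

Lemma prime_dom (P : poly -> Prop) : is_prime P -> subid NIe P -> dominating e (Tset P).
Proof.
move=> hP h; apply/forallP => x; apply/set0Pn.
have : P (\prod_(j in cnbhd e x) 'X_j) by apply: h; apply: gen_in; exists x.
case/(prime_prod hP) => j jN /TsetP jT; exists j; by rewrite inE jT jN.
Qed.

Lemma minprime_char (S : {set 'I_n}) :
  minimal_prime NIe (VI S) <-> minimal_dominating e S.
Proof.
split.
  case=> _ /NI_subP domS hmin; apply/minsetP; split => // B domB BS.
  apply/eqP; rewrite eqEsubset BS /=; apply: var_ideal_subP.
  apply: hmin; [exact: var_ideal_prime | exact/NI_subP | exact: var_ideal_mono].
case/minsetP => domS hmin; split; [exact: var_ideal_prime | exact/NI_subP |].
move=> Q hQ NQ QS.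
have hT := prime_dom hQ NQ.
have TS : Tset Q \subset S.
  by apply: var_ideal_subP => p /(Tset_sub (prime_ideal hQ)) /QS.
rewrite -(hmin _ hT TS); exact: Tset_sub (prime_ideal hQ).
Qed.

Lemma part1 (P : poly -> Prop) : minimal_prime NIe P ->
  exists S, minimal_dominating e S /\ eqid P (VI S).
Proof.
case=> hP NP hmin.
have hT := prime_dom hP NP.
have TP := Tset_sub (prime_ideal hP).
have PT : subid P (VI (Tset P)).
  by apply: hmin => //; [exact: var_ideal_prime | exact/NI_subP].
exists (Tset P); split; last by move=> p; split; [exact: PT | exact: TP].
apply/minsetP; split => // B domB BT.
apply/eqP; rewrite eqEsubset BT /=; apply: var_ideal_subP.
move=> p /TP /hmin; apply => //; first exact: var_ideal_prime.
  exact/NI_subP.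
by move=> q /(var_ideal_mono BT) /TP.
Qed.

End Graph.



Theorem lemma2p2 (k : fieldType) (n : nat) (e : rel 'I_n) :
  (0 < n)%N -> simple_graph e ->
  [/\ (forall P : {mpoly k[n]} -> Prop, minimal_prime (@NI k n e) P ->
         exists S : {set 'I_n},
           minimal_dominating e S /\ eqid P (@var_ideal k n S)),
      ideal_height (@NI k n e) (gamma e),
      ideal_bigheight (@NI k n e) (gamma' e) &
      ideal_height (@NI_dual k n e) (min_deg e).+1].
Proof.
move=> hn [esym eirr].
have domT : dominating e setT.
  by apply/forallP => x; apply/set0Pn; exists x; rewrite in_setI in_setT /cnbhd setU11.
split.
- exact: part1.
- have cT : (#|[set: 'I_n]| <= n)%N by rewrite cardsT card_ord.
  have [S0 [dS0 gS0 mS0]] := @bigmin_attained _ (dominating e) (fun S => #|S|) n setT domT cT.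
  split.
    exists (@var_ideal k n S0); split; [exact: var_ideal_prime | exact/NI_subP |].
    rewrite /gamma gS0; exact: var_height.
  move=> P h' hP NP hh; rewrite /gamma gS0.
  apply: leq_trans (mS0 _ (prime_dom hP NP)) _.
  exact: height_ge hP (Tset_sub (prime_ideal hP)) hh.
- have [S1 mS1 _] := minset_exists domT.
  case: (arg_maxnP (fun S : {set 'I_n} => #|S|) mS1) => Sm hSm hmax.
  have gm : gamma' e = #|Sm|.
    apply/eqP; rewrite eqn_leq (leq_bigmax_cond Sm hSm) andbT.
    by apply/bigmax_leqP.
  split.
    exists (@var_ideal k n Sm); split; first exact/minprime_char.
    rewrite gm; exact: var_height.
  move=> P h' hP [hc _].
  have [S [mS eS]] := part1 hP.
  apply: leq_trans (leq_bigmax_cond S mS).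
  exact: var_chain_bound (chain_eqid hc eS).
- have cardN : forall x, #|cnbhd e x| = (deg e x).+1.
    by move=> x; rewrite /cnbhd cardsU1 inE eirr.
  have dn : (deg e (Ordinal hn) <= n)%N.
    by rewrite /deg; apply: leq_trans (max_card _) _; rewrite card_ord.
  have [x0 [_ gx0 mx0]] := @bigmin_attained _ predT (deg e) n (Ordinal hn) isT dn.
  split.
    exists (@var_ideal k n (cnbhd e x0)); split; first exact: var_ideal_prime.
      apply: gen_min; first exact: var_ideal_is_ideal.
      move=> s [S [/minprime_char /minsetP [/forallP dS _] ->]].
      exact/(var_ideal_prodP k).
    rewrite /min_deg gx0 -cardN; exact: var_height.
  move=> P h' hP DP hh.
  have [x hx] : exists x, cnbhd e x \subset Tset P.
    apply: NNPP => H.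
    have domC : dominating e (~: Tset P).
      apply/forallP => x; apply/set0Pn.
      have /subsetPn [j jN jT] : ~~ (cnbhd e x \subset Tset P).
        by apply/negP => hs; apply: H; exists x.
      by exists j; rewrite in_setI in_setC jN jT.
    have [S0 mS0 sS0] := minset_exists domC.
    have : P (\prod_(j in S0) 'X_j).
      apply: DP; apply: gen_in; exists S0; split => //; exact/minprime_char.
    case/(prime_prod hP) => j jS /TsetP jT.
    by have := subsetP sS0 j jS; rewrite inE jT.
  have := height_ge hP (Tset_sub (prime_ideal hP)) hh.
  have := subset_leq_card hx; rewrite cardN.
  have : (min_deg e <= deg e x)%N by rewrite /min_deg gx0; exact: mx0.
  lia.
Qed.
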